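(* For each $n\in\mathbb{N}$, let $\ell_n\in\mathcal{D}^-[0,\infty)$, $r_n\in\mathcal{D}^+[0,\infty)$ with $\ell_n\le r_n$, and let $\psi_n\in\mathcal{D}[0,\infty)$. Suppose there exist $\ell\in\mathcal{D}^-[0,\infty)$, $r\in\mathcal{D}^+[0,\infty)$ and $\psi\in\mathcal{D}[0,\infty)$ such that $\psi_n\to\psi$, $\ell_n\to\ell$ and $r_n\to r$ uniformly on compacts as $n\to\infty$. Suppose for each $n$, $(\phi_n,\eta_n)$ solves the ESP on $[\ell_n(\cdot),r_n(\cdot)]$ for $\psi_n$. If $\phi_n\to\phi$ uniformly on compacts, then $(\phi,\phi-\psi)$ solves the ESP on $[\ell(\cdot),r(\cdot)]$ for $\psi$.
   Context: $\mathcal{D}[0,\infty)$ denotes the càdlàg functions $[0,\infty)\to(-\infty,\infty)$; $\mathcal{D}^-[0,\infty)$ (resp. $\mathcal{D}^+[0,\infty)$) denotes càdlàg functions with values in $[-\infty,\infty)$ (resp. $(-\infty,\infty]$). $f_n\to f$ uniformly on compacts means $\sup_{s\in[0,T]}|f_n(s)-f(s)|\to0$ for every $T<\infty$. ESP: given $\ell\in\mathcal{D}^-[0,\infty)$, $r\in\mathcal{D}^+[0,\infty)$ with $\ell\le r$ and $\psi\in\mathcal{D}[0,\infty)$, $(\phi,\eta)\in\mathcal{D}[0,\infty)^2$ solves the ESP on $[\ell(\cdot),r(\cdot)]$ for $\psi$ if (1) $\phi(t)=\psi(t)+\eta(t)\in[\ell(t),r(t)]$ for all $t\ge0$; (2)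 for all $0\le s\le t$: $\eta(t)-\eta(s)\ge0$ if $\phi(u)<r(u)$ for all $u\in(s,t]$, and $\eta(t)-\eta(s)\le0$ if $\phi(u)>\ell(u)$ for all $u\in(s,t]$; (3) for all $t\ge0$: $\eta(t)-\eta(t-)\ge0$ if $\phi(t)<r(t)$, and $\eta(t)-\eta(t-)\le0$ if $\phi(t)>\ell(t)$, where $\eta(0-)=0$. *)

(* Defs.v *)
From HB Require Import structures.
From mathcomp Require Import all_boot all_order all_algebra.
From mathcomp Require Import all_classical all_reals all_analysis.
Set Implicit Arguments. Unset Strict Implicit. Unset Printing Implicit Defensive.
Import Order.TTheory GRing.Theory Num.Theory.
Import numFieldNormedType.Exports.
Local Open Scope classical_set_scope.
Local Open Scope ring_scope.

Section Defs.
Context {R : realType}.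

Definition cadlag {T : topologicalType} (f : R -> T) : Prop :=
  (forall t : R, 0 <= t -> f x @[x --> t^'+] --> f t) /\
  (forall t : R, 0 < t -> exists y : T, f x @[x --> t^'-] --> y).

Definition D0 (f : R -> R) : Prop := cadlag f.
Definition Dminus (f : R -> \bar R) : Prop :=
  cadlag f /\ forall t, 0 <= t -> f t != +oo%E.
Definition Dplus (f : R -> \bar R) : Prop :=
  cadlag f /\ forall t, 0 <= t -> f t != -oo%E.

(* distance on \bar R: |a-b|, with |(+-oo) - (+-oo)| = 0 for equal infinities *)
Definition edist (a b : \bar R) : \bar R :=
  if a == b then 0%E else `|(a - b)%E|%E.

Definition ucc (fn : nat -> R -> R) (f : R -> R) : Prop :=
  forall T : R, forall e : R, 0 < e ->
    \forall n \near \oo, forall s : R, 0 <= s <= T -> `|fn n s - f s| <= e.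

Definition ucc_e (fn : nat -> R -> \bar R) (f : R -> \bar R) : Prop :=
  forall T : R, forall e : R, 0 < e ->
    \forall n \near \oo, forall s : R, 0 <= s <= T ->
      (edist (fn n s) (f s) <= e%:E)%E.

(* left limit, with the convention eta(0-) = 0 *)
Definition leftlim (eta : R -> R) (t : R) : R :=
  if t == 0 then 0 else lim (eta x @[x --> t^'-]).

Definition ESP (l r : R -> \bar R) (psi phi eta : R -> R) : Prop :=
  [/\ D0 phi, D0 eta,
   (forall t, 0 <= t -> phi t = psi t + eta t /\
                         (l t <= (phi t)%:E <= r t)%E),
   (forall s t, 0 <= s <= t ->
      ((forall u, s < u <= t -> ((phi u)%:E < r u)%E) -> eta t - eta s >= 0) /\
      ((forall u, s < u <= t -> (l u < (phi u)%:E)%E) -> eta t - eta s <= 0)) &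
   (forall t, 0 <= t ->
      (((phi t)%:E < r t)%E -> eta t - leftlim eta t >= 0) /\
      ((l t < (phi t)%:E)%E -> eta t - leftlim eta t <= 0))].

End Defs.

(* Main.v *)
From Pilot Require Import Defs.
From HB Require Import structures.
From mathcomp Require Import all_boot all_order all_algebra.
From mathcomp Require Import all_classical all_reals all_analysis.
From mathcomp Require Import lra.
Import Order.TTheory GRing.Theory Num.Theory.
Import numFieldNormedType.Exports.
Import Pilot.Defs.
Local Open Scope classical_set_scope.
Local Open Scope ring_scope.

Section Helpers.
Context {R : realType}.
Implicit Types (a b : \bar R) (x e : R).

Lemma edist_fin (x y : R) : edist x%:E y%:E = `|x - y|%:E.
Proof.
rewrite /edist; case: eqP => [[->]|_]; first by rewrite subrr normr0.
by [].
Qed.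

Lemma edistC a b : edist a b = edist b a.
Proof.
case: a => [a||]; case: b => [b||] //; rewrite ?edist_fin.
by rewrite distrC.
all: try by [].
all: rewrite /edist /=.
all: try by [].
Show.
Qed.

Lemma edist_le a b x e : (edist a b <= e%:E)%E -> (a <= x%:E)%E ->
  (b <= (x + e)%:E)%E.
Proof.
case: a => [a||]; case: b => [b||] //=; rewrite ?edist_fin ?lee_fin.
- rewrite ler_norml; lra.
- by move=> *; rewrite leNye.
Qed.

Lemma edist_ge a b x e : (edist a b <= e%:E)%E -> (x%:E <= a)%E ->
  ((x - e)%:E <= b)%E.
Proof.
case: a => [a||]; case: b => [b||] //=; rewrite ?edist_fin ?lee_fin.
- rewrite ler_norml; lra.
- by move=> *; rewrite leey.
Qed.

Lemma edist_gt a b x e : (edist a b <= e%:E)%E -> (x%:E < a)%E ->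
  ((x - e)%:E < b)%E.
Proof.
case: a => [a||]; case: b => [b||] //=; rewrite ?edist_fin ?lee_fin ?lte_fin.
- rewrite ler_norml; lra.
- by move=> *; exact: ltry.
Qed.

Lemma edist_lt a b x e : (edist a b <= e%:E)%E -> (a < x%:E)%E ->
  (b < (x + e)%:E)%E.
Proof.
case: a => [a||]; case: b => [b||] //=; rewrite ?edist_fin ?lee_fin ?lte_fin.
- rewrite ler_norml; lra.
- by move=> *; exact: ltNyr.
Qed.


Arguments edist_le {a b x e}.
Arguments edist_ge {a b x e}.
Arguments edist_gt {a b x e}.
Arguments edist_lt {a b x e}.

Lemma near_right_delta (u : R) (P : R -> Prop) :
  (\forall x \near u^'+, P x) -> exists2 d, 0 < d & forall x, u < x <= u + d -> P x.
Proof.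
move=> /nbhs_ballP[e /= e0 he]; exists (e / 2); first by rewrite divr_gt0.
move=> x /andP[ux xu]; apply: he => //=.
rewrite -ball_normE /= ltr_norml; apply/andP; split; lra.
Qed.

Arguments near_right_delta {u P}.

Lemma ucc_sub fn gn (f g : R -> R) : ucc fn f -> ucc gn g ->
  ucc (fun n x => fn n x - gn n x) (fun x => f x - g x).
Proof.
move=> hf hg T e e0.
have e2 : 0 < e / 2 by rewrite divr_gt0.
move: (hf T _ e2) (hg T _ e2); apply: filterS2 => n h1 h2 s hs.
move: (h1 s hs) (h2 s hs); rewrite !ler_norml => /andP[a1 a2] /andP[b1 b2].
apply/andP; split; lra.
Qed.

Lemma ucc_neg fn (f : R -> R) : ucc fn f ->
  ucc (fun n x => - fn n x) (fun x => - f x).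
Proof.
move=> hf T e e0; move: (hf T _ e0); apply: filterS => n h1 s hs.
by rewrite -opprD normrN; exact: h1.
Qed.

Lemma ucc_ext fn gn (f : R -> R) : ucc fn f ->
  (forall n x, 0 <= x -> fn n x = gn n x) -> ucc gn f.
Proof.
move=> hf he T e e0; move: (hf T _ e0); apply: filterS => n h1 s hs.
rewrite -he; [exact: h1| by case/andP: hs].
Qed.

Lemma D0_sub (f g : R -> R) : D0 f -> D0 g -> D0 (fun x => f x - g x).
Proof.
move=> [f1 f2] [g1 g2]; split.
- by move=> t t0; apply: cvgB; [exact: f1|exact: g1].
- move=> t t0; have [y1 h1] := f2 t t0; have [y2 h2] := g2 t t0.
  by exists (y1 - y2); apply: cvgB.
Qed.

Lemma D0_neg (f : R -> R) : D0 f -> D0 (fun x => - f x).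
Proof.
move=> [f1 f2]; split.
- by move=> t t0; apply: cvgN; exact: f1.
- move=> t t0; have [y1 h1] := f2 t t0.
  by exists (- y1); apply: cvgN.
Qed.

Lemma leftlim_eq (f : R -> R) t y : 0 < t -> f x @[x --> t^'-] --> y ->
  leftlim f t = y.
Proof.
move=> t0 h; rewrite /leftlim ifF; last by rewrite gt_eqF.
exact: cvg_lim.
Qed.

Arguments leftlim_eq {f t y}.

Lemma leftlim_close (f g : R -> R) t yf yg e : 0 < t ->
  f x @[x --> t^'-] --> yf -> g x @[x --> t^'-] --> yg ->
  (forall x, 0 <= x <= t -> `|f x - g x| <= e) -> `|yf - yg| <= e.
Proof.
move=> t0 hf hg hb.
have hfg : (fun x => f x - g x) x @[x --> t^'-] --> yf - yg by apply: cvgB.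
have near_b : \forall x \near t^'-, `|f x - g x| <= e.
  near=> x; apply: hb; apply/andP; split.
    by apply: ltW; near: x; exact: nbhs_left_gt.
  by near: x; exact: nbhs_left_le.
rewrite ler_norml; apply/andP; split.
- apply: (ler_cvg_to (cvg_cst (- e)) hfg).
  by apply: filterS near_b => x; rewrite ler_norml => /andP[].
- apply: (ler_cvg_to hfg (cvg_cst e)).
  by apply: filterS near_b => x; rewrite ler_norml => /andP[].
Unshelve. all: by end_near.
Qed.


Arguments leftlim_close {f g t yf yg e}.

Lemma ucc_D0 fn (f : R -> R) : ucc fn f -> (forall n, D0 (fn n)) -> D0 f.
Proof.
move=> hu hD; split.
- move=> t t0; apply/cvgrPdist_le => e e0.
  have e3 : 0 < e / 3 by rewrite divr_gt0.
  have [n hn] := filter_ex (hu (t + 1) _ e3).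
  have := (hD n).1 t t0; move/cvgrPdist_le => /(_ _ e3) hc.
  near=> x.
  have hx : 0 <= x <= t + 1.
    apply/andP; split.
      by apply: (le_trans t0); near: x; exact: nbhs_right_ge.
    by near: x; apply: nbhs_right_le; lra.
  have ht : 0 <= t <= t + 1 by apply/andP; split => //; lra.
  have h1 := hn x hx; have h2 := hn t ht.
  have h3 : `|fn n t - fn n x| <= e / 3 by near: x.
  move: h1 h2 h3; rewrite !ler_norml => /andP[a1 a2] /andP[b1 b2] /andP[c1 c2].
  apply/andP; split; lra.
- move=> t t0.
  have hc : cvg (f x @[x --> t^'-]).
    apply: cauchy_cvg; apply: cauchy_exP => e e0.
    have e3 : 0 < e / 3 by rewrite divr_gt0.
    have [n hn] := filter_ex (hu t _ e3).
    have [y hy] := (hD n).2 t t0.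
    move/cvgrPdist_le : hy => /(_ _ e3) hy.
    exists y; suff : \forall x \near t^'-, ball y e (f x) by [].
    near=> x.
    rewrite -ball_normE /=.
    have hx : 0 <= x <= t.
      apply/andP; split.
        by apply: ltW; near: x; exact: nbhs_left_gt.
      by near: x; exact: nbhs_left_le.
    have h1 := hn x hx.
    have h3 : `|y - fn n x| <= e / 3 by near: x.
    move: h1 h3; rewrite !ler_norml ltr_norml => /andP[a1 a2] /andP[c1 c2].
    apply/andP; split; lra.
  by exists (lim (f x @[x --> t^'-])).
Unshelve. all: by end_near.
Qed.


Lemma mono_local (eta : R -> R) (s t : R) : s <= t ->
  eta x @[x --> s^'+] --> eta s ->
  (forall u, s < u <= t -> exists2 y, eta x @[x --> u^'-] --> y & y <= eta u) ->
  (forall u, s < u < t -> exists2 d, 0 < d &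
      forall v, u <= v <= u + d -> eta u <= eta v) ->
  eta s <= eta t.
Proof.
move=> st hr hl hloc.
case: (eqVneq s t) => [<-//|stn].
have st' : s < t by rewrite lt_neqAle stn.
have key : forall a : R, s < a <= t -> eta a <= eta t.
  move=> a /andP[sa a_t].
  pose S := [set x | a <= x <= t /\ forall y, a <= y <= x -> eta a <= eta y].
  have Sa : S a.
    split; first by rewrite lexx.
    move=> y /andP[h1 h2]; have -> : y = a by apply/eqP; rewrite eq_le h1 h2.
    by [].
  have ubS : ubound S t by move=> x [/andP[_ ?] _].
  have hsup : has_sup S by split; [exists a | exists t].
  set x := sup S.
  have ax : a <= x := sup_upper_bound hsup Sa.
  have xt : x <= t := ge_sup (ex_intro _ a Sa) ubS.
  have below : forall y, a <= y < x -> eta a <= eta y.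
    move=> y /andP[ay yx].
    have xy0 : 0 < x - y by rewrite subr_gt0.
    have [z [/andP[_ zt] hz] yz] := sup_adherent xy0 hsup.
    apply: hz; apply/andP; split => //.
    rewrite -/x in yz; apply: ltW; lra.
  have atx : eta a <= eta x.
    case: (eqVneq a x) => [<-//| axn].
    have ax' : a < x by rewrite lt_neqAle axn.
    have sx : s < x <= t by apply/andP; split => //; lra.
    have [y hy hyx] := hl x sx.
    apply: (le_trans _ hyx); apply: (ler_cvg_to (cvg_cst (eta a)) hy).
    near=> v; apply: below; apply/andP; split.
      by near: v; exact: nbhs_left_ge.
    by near: v; exact: nbhs_left_lt.
  have Sx : forall y, a <= y <= x -> eta a <= eta y.
    move=> y /andP[ay yx]; case: (ltP y x) => [yx'|xy].
      by apply: below; rewrite ay yx'.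
    by have -> : y = x by apply/eqP; rewrite eq_le yx xy.
  case: (ltP x t) => [xt'|tx]; last first.
    by have <- : x = t by apply/eqP; rewrite eq_le xt tx.
  have sx : s < x < t by apply/andP; split => //; lra.
  have [d d0 hd] := hloc x sx.
  pose x' := Order.min (x + d) t.
  have x'1 : x' <= x + d by rewrite ge_min lexx.
  have x'2 : x' <= t by rewrite ge_min lexx orbT.
  have x'3 : x < x' by rewrite lt_min xt' andbT; lra.
  have Sx' : S x'.
    split; first by apply/andP; split => //; lra.
    move=> y /andP[ay yx']; case: (leP y x) => [yx|xy].
      by apply: Sx; rewrite ay yx.
    apply: (le_trans atx); apply: hd; apply/andP; split; lra.
  have := sup_upper_bound hsup Sx'; rewrite -/x; lra.
apply: (ler_cvg_to hr (cvg_cst (eta t))).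
near=> v; apply: key; apply/andP; split.
  by near: v; exact: nbhs_right_gt.
by near: v; exact: nbhs_right_le.
Unshelve. all: by end_near.
Qed.


Lemma side (etan : nat -> R -> R) (eta : R -> R)
    (Gn : nat -> R -> Prop) (G : R -> Prop) :
  (forall n, D0 (etan n)) -> D0 eta -> ucc etan eta ->
  (forall n s t, 0 <= s <= t -> (forall u, s < u <= t -> Gn n u) ->
     etan n s <= etan n t) ->
  (forall n t, 0 <= t -> Gn n t -> leftlim (etan n) t <= etan n t) ->
  (forall u, 0 <= u -> G u -> exists2 d, 0 < d &
     \forall n \near \oo, forall v, u <= v <= u + d -> Gn n v) ->
  (forall t, 0 <= t -> G t -> leftlim eta t <= eta t) /\
  (forall s t, 0 <= s <= t -> (forall u, s < u <= t -> G u) -> eta s <= eta t).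
Proof.
move=> hDn hD hu hmon hjump hloc.
have part1 : forall t, 0 <= t -> G t -> leftlim eta t <= eta t.
  move=> t t0 Gt.
  have [d d0 hd] := hloc t t0 Gt.
  have htd : t <= t <= t + d by rewrite lexx /=; lra.
  have hGt : \forall n \near \oo, Gn n t.
    by move: hd; apply: filterS => n h; exact: h.
  apply/ler_addgt0Pr => e e0.
  have e2 : 0 < e / 2 by rewrite divr_gt0.
  have [n [h1 h2]] := filter_ex (filterI hGt (hu t _ e2)).
  have ht : 0 <= t <= t by rewrite lexx t0.
  have h3 := h2 t ht.
  have hj := hjump n t t0 h1.
  case: (eqVneq t 0) => [t_0 | tn0].
    rewrite /leftlim t_0 eqxx in hj *; rewrite t_0 in h3.
    move: h3; rewrite ler_norml => /andP[a1 a2]; lra.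
  have t0' : 0 < t by rewrite lt_neqAle eq_sym tn0 t0.
  have [y hy] := hD.2 t t0'.
  have [yn hyn] := (hDn n).2 t t0'.
  rewrite (leftlim_eq t0' hy); rewrite (leftlim_eq t0' hyn) in hj.
  have hc := leftlim_close t0' hyn hy h2.
  move: hc h3; rewrite !ler_norml => /andP[a1 a2] /andP[b1 b2]; lra.
split => //.
move=> s t /andP[s0 st] hG.
apply: mono_local => //.
- exact: hD.1 s s0.
- move=> u /andP[su ut].
  have u0 : 0 < u by lra.
  have [y hy] := hD.2 u u0.
  exists y => //; rewrite -(leftlim_eq u0 hy).
  by apply: part1; [lra | apply: hG; rewrite su ut].
- move=> u /andP[su ut].
  have u0 : 0 <= u by lra.
  have Gu : G u by apply: hG; rewrite su ltW.
  have [d d0 hd] := hloc u u0 Gu.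
  exists d => // v /andP[uv vd].
  apply/ler_addgt0Pr => e e0.
  have e2 : 0 < e / 2 by rewrite divr_gt0.
  have [n [h1 h2]] := filter_ex (filterI hd (hu (u + d) _ e2)).
  have hm : etan n u <= etan n v.
    apply: hmon; first by rewrite u0 uv.
    move=> w /andP[uw wv]; apply: h1; apply/andP; split; lra.
  have hu1 : 0 <= u <= u + d by apply/andP; split; lra.
  have hv1 : 0 <= v <= u + d by apply/andP; split; lra.
  move: (h2 u hu1) (h2 v hv1); rewrite !ler_norml => /andP[a1 a2] /andP[b1 b2].
  lra.
Qed.


Lemma gap_r (phin : nat -> R -> R) (phi : R -> R)
    (rn : nat -> R -> \bar R) (r : R -> \bar R) :
  ucc phin phi -> ucc_e rn r -> D0 phi ->
  (forall t, 0 <= t -> r x @[x --> t^'+] --> r t) ->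
  forall u, 0 <= u -> ((phi u)%:E < r u)%E -> exists2 d, 0 < d &
    \forall n \near \oo, forall v, u <= v <= u + d -> ((phin n v)%:E < rn n v)%E.
Proof.
move=> hu he hD hr u u0 hlt.
have [c hc1 hc2] : exists2 c : R, phi u < c & (c%:E < r u)%E.
  move: hlt; case: (r u) => [ru||] /=.
  - rewrite lte_fin => h; exists ((phi u + ru) / 2); first lra.
    rewrite lte_fin; lra.
  - by move=> _; exists (phi u + 1); [lra | exact: ltry].
  - by rewrite ltNge leNye.
have g0 : 0 < (c - phi u) / 4 by rewrite divr_gt0 // subr_gt0.
have hn1 : \forall x \near u^'+, (c%:E < r x)%E.
  exact: (hr u u0 _ (open_ereal_gt' hc2)).
have hn2 : \forall x \near u^'+, `|phi u - phi x| <= (c - phi u) / 4.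
  by move/cvgrPdist_le : (hD.1 u u0) => /(_ _ g0).
have [d d0 hd] := near_right_delta (filterI hn1 hn2).
exists d => //.
have hall : forall v, u <= v <= u + d ->
    (c%:E < r v)%E /\ phi v <= phi u + (c - phi u) / 4.
  move=> v /andP[uv vd]; case: (eqVneq u v) => [<-|uvn].
    by split => //; lra.
  have uv' : u < v by rewrite lt_neqAle uvn uv.
  have [h1 h2] := hd v (introT andP (conj uv' vd)).
  by split => //; move: h2; rewrite ler_norml => /andP[]; lra.
move: (hu (u + d) _ g0) (he (u + d) _ g0); apply: filterS2 => n h1 h2 v hv.
have hv0 : 0 <= v <= u + d by case/andP: hv => a b; apply/andP; split; lra.
have [a1 a2] := hall v hv.
have b1 := h1 v hv0; have b2 := h2 v hv0.
rewrite edistC in b2; have := edist_gt b2 a1.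
apply: le_lt_trans; rewrite lee_fin.
by move: b1; rewrite ler_norml => /andP[]; lra.
Qed.

Lemma gap_l (phin : nat -> R -> R) (phi : R -> R)
    (ln : nat -> R -> \bar R) (l : R -> \bar R) :
  ucc phin phi -> ucc_e ln l -> D0 phi ->
  (forall t, 0 <= t -> l x @[x --> t^'+] --> l t) ->
  forall u, 0 <= u -> (l u < (phi u)%:E)%E -> exists2 d, 0 < d &
    \forall n \near \oo, forall v, u <= v <= u + d -> (ln n v < (phin n v)%:E)%E.
Proof.
move=> hu he hD hr u u0 hlt.
have [c hc1 hc2] : exists2 c : R, c < phi u & (l u < c%:E)%E.
  move: hlt; case: (l u) => [lu||] /=.
  - rewrite lte_fin => h; exists ((phi u + lu) / 2); first lra.
    rewrite lte_fin; lra.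
  - by rewrite ltNge leey.
  - by move=> _; exists (phi u - 1); [lra | exact: ltNyr].
have g0 : 0 < (phi u - c) / 4 by rewrite divr_gt0 // subr_gt0.
have hn1 : \forall x \near u^'+, (l x < c%:E)%E.
  exact: (hr u u0 _ (open_ereal_lt' hc2)).
have hn2 : \forall x \near u^'+, `|phi u - phi x| <= (phi u - c) / 4.
  by move/cvgrPdist_le : (hD.1 u u0) => /(_ _ g0).
have [d d0 hd] := near_right_delta (filterI hn1 hn2).
exists d => //.
have hall : forall v, u <= v <= u + d ->
    (l v < c%:E)%E /\ phi u - (phi u - c) / 4 <= phi v.
  move=> v /andP[uv vd]; case: (eqVneq u v) => [<-|uvn].
    by split => //; lra.
  have uv' : u < v by rewrite lt_neqAle uvn uv.
  have [h1 h2] := hd v (introT andP (conj uv' vd)).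
  by split => //; move: h2; rewrite ler_norml => /andP[]; lra.
move: (hu (u + d) _ g0) (he (u + d) _ g0); apply: filterS2 => n h1 h2 v hv.
have hv0 : 0 <= v <= u + d by case/andP: hv => a b; apply/andP; split; lra.
have [a1 a2] := hall v hv.
have b1 := h1 v hv0; have b2 := h2 v hv0.
rewrite edistC in b2; have := edist_lt b2 a1.
move/lt_le_trans; apply; rewrite lee_fin.
by move: b1; rewrite ler_norml => /andP[]; lra.
Qed.

Lemma bound_l (phin : nat -> R -> R) (phi : R -> R)
    (ln : nat -> R -> \bar R) (l : R -> \bar R) t : 0 <= t ->
  ucc phin phi -> ucc_e ln l -> (forall n, (ln n t <= (phin n t)%:E)%E) ->
  (l t <= (phi t)%:E)%E.
Proof.
move=> t0 hu he hb; apply/lee_addgt0Pr => e e0.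
have e2 : 0 < e / 2 by rewrite divr_gt0.
have [n [h1 h2]] := filter_ex (filterI (hu t _ e2) (he t _ e2)).
have ht : 0 <= t <= t by rewrite lexx t0.
have b1 := h1 t ht; have b2 := h2 t ht.
have hl : (ln n t <= (phi t + e / 2)%:E)%E.
  apply: (le_trans (hb n)); rewrite lee_fin.
  by move: b1; rewrite ler_norml => /andP[]; lra.
have := edist_le b2 hl; move/le_trans; apply.
by rewrite -EFinD lee_fin; lra.
Qed.

Lemma bound_r (phin : nat -> R -> R) (phi : R -> R)
    (rn : nat -> R -> \bar R) (r : R -> \bar R) t : 0 <= t ->
  ucc phin phi -> ucc_e rn r -> (forall n, ((phin n t)%:E <= rn n t)%E) ->
  ((phi t)%:E <= r t)%E.
Proof.
move=> t0 hu he hb; apply/lee_addgt0Pr => e e0.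
have e2 : 0 < e / 2 by rewrite divr_gt0.
have [n [h1 h2]] := filter_ex (filterI (hu t _ e2) (he t _ e2)).
have ht : 0 <= t <= t by rewrite lexx t0.
have b1 := h1 t ht; have b2 := h2 t ht.
have hl : ((phi t - e / 2)%:E <= rn n t)%E.
  apply: (le_trans _ (hb n)); rewrite lee_fin.
  by move: b1; rewrite ler_norml => /andP[]; lra.
have := edist_ge b2 hl.
case: (r t) => [rt||] //=.
- by rewrite -EFinD !lee_fin => ?; lra.
- by move=> _; rewrite addye // leey.
Qed.


Lemma leftlim_neg (f : R -> R) t : D0 f -> 0 <= t ->
  leftlim (fun x => - f x) t = - leftlim f t.
Proof.
move=> [_ hf] t0; case: (eqVneq t 0) => [->|tn0].
  by rewrite /leftlim eqxx oppr0.
have t0' : 0 < t by rewrite lt_neqAle eq_sym tn0 t0.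
have [y hy] := hf t t0'.
rewrite (leftlim_eq t0' hy); apply: leftlim_eq t0' _.
exact: cvgN.
Qed.

End Helpers.
Arguments ucc_D0 {R fn f}.
Arguments D0_sub {R f g}.
Arguments D0_neg {R f}.
Arguments ucc_sub {R fn gn f g}.
Arguments ucc_neg {R fn f}.
Arguments ucc_ext {R fn gn f}.
Arguments gap_r {R phin phi rn r}.
Arguments gap_l {R phin phi ln l}.
Arguments bound_l {R phin phi ln l t}.
Arguments bound_r {R phin phi rn r t}.
Arguments side {R etan eta Gn G}.
Arguments leftlim_neg {R f t}.

Theorem proposition2p5 (R : realType)
  (ln : nat -> R -> \bar R) (rn : nat -> R -> \bar R) (psin : nat -> R -> R)
  (phin etan : nat -> R -> R)
  (l r : R -> \bar R) (psi phi : R -> R) :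
  (forall n, Dminus (ln n)) -> (forall n, Dplus (rn n)) ->
  (forall n t, 0 <= t -> (ln n t <= rn n t)%E) ->
  (forall n, D0 (psin n)) ->
  Dminus l -> Dplus r -> D0 psi ->
  ucc psin psi -> ucc_e ln l -> ucc_e rn r ->
  (forall n, ESP (ln n) (rn n) (psin n) (phin n) (etan n)) ->
  ucc phin phi ->
  ESP l r psi phi (fun t => phi t - psi t).
Proof.
move=> _ _ _ _ hDl hDr hDpsi hupsi hul hur hESP huphi.
have hDphin : forall n, D0 (phin n) by move=> n; case: (hESP n).
have hDetan : forall n, D0 (etan n) by move=> n; case: (hESP n).
have hDphi := ucc_D0 huphi hDphin.
have hDeta : D0 (fun t => phi t - psi t) := D0_sub hDphi hDpsi.
have hueta : ucc etan (fun t => phi t - psi t).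
  apply: (ucc_ext (ucc_sub huphi hupsi)) => n x x0.
  have [_ _ c3 _ _] := hESP n.
  by rewrite (c3 x x0).1 addrC addKr.
have hrc : forall t, 0 <= t -> r x @[x --> t^'+] --> r t.
  by move=> t t0; exact: hDr.1.1 t t0.
have hlc : forall t, 0 <= t -> l x @[x --> t^'+] --> l t.
  by move=> t t0; exact: hDl.1.1 t t0.
have hm1 : forall n s t, 0 <= s <= t ->
    (forall u, s < u <= t -> ((phin n u)%:E < rn n u)%E) ->
    etan n s <= etan n t.
  move=> n s t hs hG; have [_ _ _ c4 _] := hESP n.
  by rewrite -subr_ge0; exact: (c4 s t hs).1 hG.
have hj1 : forall n t, 0 <= t -> ((phin n t)%:E < rn n t)%E ->
    leftlim (etan n) t <= etan n t.
  move=> n t t0 hG; have [_ _ _ _ c5] := hESP n.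
  by rewrite -subr_ge0; exact: (c5 t t0).1 hG.
have [Rj Rm] := side hDetan hDeta hueta hm1 hj1 (gap_r huphi hur hDphi hrc).
have hm2 : forall n s t, 0 <= s <= t ->
    (forall u, s < u <= t -> (ln n u < (phin n u)%:E)%E) ->
    - etan n s <= - etan n t.
  move=> n s t hs hG; have [_ _ _ c4 _] := hESP n.
  by rewrite lerN2 -subr_le0; exact: (c4 s t hs).2 hG.
have hj2 : forall n t, 0 <= t -> (ln n t < (phin n t)%:E)%E ->
    leftlim (fun x => - etan n x) t <= - etan n t.
  move=> n t t0 hG; have [_ _ _ _ c5] := hESP n.
  by rewrite leftlim_neg // lerN2 -subr_le0; exact: (c5 t t0).2 hG.
have [Lj Lm] := side (fun n => D0_neg (hDetan n)) (D0_neg hDeta)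
   (ucc_neg hueta) hm2 hj2 (gap_l huphi hul hDphi hlc).
split => //.
- move=> t t0; split; first by rewrite addrC subrK.
  apply/andP; split.
  + apply: (bound_l t0 huphi hul) => n.
    have [_ _ c3 _ _] := hESP n.
    by case/andP: (c3 t t0).2.
  + apply: (bound_r t0 huphi hur) => n.
    have [_ _ c3 _ _] := hESP n.
    by case/andP: (c3 t t0).2.
- move=> s t hst; split => hG.
    by rewrite subr_ge0; exact: Rm s t hst hG.
  by have := Lm s t hst hG; rewrite lerN2 subr_le0.
- move=> t t0; split => hG.
    by rewrite subr_ge0; exact: Rj t t0 hG.
  by have := Lj t t0 hG; rewrite leftlim_neg // lerN2 subr_le0.
Qed.
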